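(* Let $n\geq 1$ and $t_i,p_i\in\mathbb{N}_{\geq 0}$ for $1\leq i\leq n$, and set $X=\bigcup_{i=1}^n(t_i+\mathbb{N}_{\geq 0}\cdot p_i)$, where $\mathbb{N}_{\geq 0}\cdot p_i=\{x\cdot p_i\mid x\in\mathbb{N}_{\geq 0}\}$. If there exists $T\geq 0$ such that $\{x\in\mathbb{N}_{\geq 0}\mid x\geq T\}\subseteq X$, then with $T_{\max}=\max\{t_i\mid 1\leq i\leq n\}$ we have $\{x\in\mathbb{N}_{\geq 0}\mid x\geq T_{\max}\}\subseteq X$. *)

(* Defs.v *)
From mathcomp Require Import all_boot.
Set Implicit Arguments. Unset Strict Implicit. Unset Printing Implicit Defensive.

Definition inX (n : nat) (t p : 'I_n -> nat) (x : nat) : Prop :=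
  exists i : 'I_n, exists k : nat, x = t i + k * p i.

(* Main.v *)
Require Import Defs.
From mathcomp Require Import all_boot.

Theorem lemma19 (n : nat) (t p : 'I_n -> nat) (hn : 1 <= n) :
  (exists T : nat, forall x : nat, T <= x -> inX t p x) ->
  forall x : nat, \max_(i < n) t i <= x -> inX t p x.
Proof.
move=> [T HT] x Hx.
set Q := \prod_(j < n) maxn (p j) 1.
have hQ0 : 0 < Q by rewrite /Q; apply: prodn_gt0 => j; rewrite leq_max orbT.
have hTy : T <= x + T * Q by apply: leq_trans (leq_pmulr T hQ0) (leq_addl _ _).
have [i [k Hk]] := HT _ hTy.
exists i, ((x - t i) %/ p i).
have hti : t i <= x by apply: leq_trans Hx; exact: (leq_bigmax i).
have Hd : p i %| x - t i.
  have E : (x - t i) + T * Q = k * p i.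
    by apply/eqP; rewrite -(eqn_add2l (t i)) addnA subnKC // Hk.
  case: (posnP (p i)) => hp.
    by move: E; rewrite hp muln0 => /eqP; rewrite addn_eq0 => /andP[/eqP -> _].
  have hQ : p i %| Q.
    rewrite /Q (bigD1 i) //= dvdn_mulr //.
    by rewrite (maxn_idPl _).
  by rewrite -(dvdn_addl _ (dvdn_mull T hQ)) E dvdn_mull.
by rewrite divnK // subnKC.
Qed.
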